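(* Let $G$ be a simple graph with at least one edge on $n=pq$ vertices labelled $u_iw_j$ ($i\in\{1,\dots,p\}$, $j\in\{1,\dots,q\}$). If the density matrix $\rho(G)$ is separable in $\mathbb{C}^p_A\otimes\mathbb{C}^q_B$, then $\Delta(G)=\Delta(G^{\Gamma_B})$.
   Context: For a simple graph $G=(V,E)$ on vertices $v_1,\dots,v_n$: $M(G)$ is the adjacency matrix, $\Delta(G)$ the diagonal degree matrix ($(i,i)$ entry = degree of $v_i$), $L(G)=\Delta(G)-M(G)$ the Laplacian, and the density matrix of $G$ is $\rho(G)=\frac{1}{2|E|}L(G)$ (defined when $|E|\ge1$). When $n=pq$, the vertices are labelled as ordered pairs $u_iw_j$ ($1\le i\le p$, $1\le j\le q$), and vertex $u_iw_j$ is identified with the basis vector $|u_i\rangle\otimes|w_j\rangle$, where $\{|u_i\rangle\}$ and $\{|w_j\rangle\}$ are orthonormal bases of $\mathbb{C}^p_A$ and $\mathbb{C}^q_B$; matrices indexed by vertices are thus operators on $\mathbb{C}^p_A\otimes\mathbb{C}^q_B$. The partial transpose of $G$ is the graph $G^{\Gamma_B}=(V,E')$ with $\{u_iw_j,u_kw_l\}\in E'$ iff $\{u_iw_l,u_kw_j\}\in E$. A density matrix on $\mathbb{C}^p_A\otimes\mathbb{C}^q_B$ is separable if it is a convex combination of product states $|a\rangle\langle a|\otimes|b\rangle\langle b|$. *)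

(* Defs.v *)
(* Complex numbers are R[i] = complex R for R : realType
   (any realType is the real field, so R[i] is C). *)
From HB Require Import structures.
From mathcomp Require Import all_boot all_order all_algebra.
From mathcomp Require Import reals complex.
Set Implicit Arguments. Unset Strict Implicit. Unset Printing Implicit Defensive.
Import Order.TTheory GRing.Theory Num.Theory.
Local Open Scope ring_scope.

(* Vertex u_i w_j is the pair (i, j) : 'I_p * 'I_q; it is identified with the
   basis vector |u_i> (x) |w_j> of C^p (x) C^q, so an operator on
   C^p (x) C^q is a matrix indexed by vertices: a function V -> V -> C. *)
Definition vtx (p q : nat) := ('I_p * 'I_q)%type.
Definition op (C : Type) (p q : nat) := vtx p q -> vtx p q -> C.

Definition simple_graph (p q : nat) (e : rel (vtx p q)) : Prop :=
  symmetric e /\ irreflexive e.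

Definition nedges (p q : nat) (e : rel (vtx p q)) : nat :=
  (#|[set uv : vtx p q * vtx p q | e uv.1 uv.2]|)./2.

Definition deg (p q : nat) (e : rel (vtx p q)) (v : vtx p q) : nat :=
  #|[set w | e v w]|.

Definition adjm (C : nzRingType) (p q : nat) (e : rel (vtx p q)) : op C p q :=
  fun x y => (e x y)%:R.
Definition degm (C : nzRingType) (p q : nat) (e : rel (vtx p q)) : op C p q :=
  fun x y => if x == y then (deg e x)%:R else 0.
Definition lapm (C : nzRingType) (p q : nat) (e : rel (vtx p q)) : op C p q :=
  fun x y => degm C e x y - adjm C e x y.

Definition density (C : fieldType) (p q : nat) (e : rel (vtx p q)) : op C p q :=
  fun x y => ((2 * nedges e)%:R)^-1 * lapm C e x y.

Definition ptrans (p q : nat) (e : rel (vtx p q)) : rel (vtx p q) :=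
  fun x y => e (x.1, y.2) (y.1, x.2).

Definition prod_state (R : rcfType) (p q : nat)
    (a : 'I_p -> R[i]) (b : 'I_q -> R[i]) : op R[i] p q :=
  fun x y => (a x.1 * (a y.1)^*) * (b x.2 * (b y.2)^*).

Definition separable (R : rcfType) (p q : nat) (rho : op R[i] p q) : Prop :=
  exists (m : nat) (lam : 'I_m -> R) (a : 'I_m -> 'I_p -> R[i])
         (b : 'I_m -> 'I_q -> R[i]),
    [/\ forall k, 0 <= lam k,
        \sum_(k < m) lam k = 1,
        forall k, \sum_(i < p) a k i * (a k i)^* = 1,
        forall k, \sum_(j < q) b k j * (b k j)^* = 1 &
        forall x y, rho x y = \sum_(k < m) (lam k)%:C%C * prod_state (a k) (b k) x y].

(* Main.v *)
Require Import Defs.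
From HB Require Import structures.
From mathcomp Require Import all_boot all_order all_algebra.
From mathcomp Require Import reals complex ring.
From Stdlib Require Import FunctionalExtensionality.
Import Order.TTheory GRing.Theory Num.Theory.
Local Open Scope ring_scope.

Lemma deg_sum (C : nzRingType) (p q : nat) (f : rel (vtx p q)) (x : vtx p q) :
  (deg f x)%:R = \sum_(y : 'I_p * 'I_q) ((f x y)%:R : C).
Proof.
rewrite /deg -(natr_sum _ _ _ (fun y => nat_of_bool (f x y))).
congr (_ %:R).
rewrite cardsE -sum1_card big_mkcond /=.
by apply: eq_bigr => y _; rewrite unfold_in; case: (f x y).
Qed.

Lemma sum_pair (R : rcfType) (p q : nat) (f : 'I_p -> R[i]) (g : 'I_q -> R[i]) :
  \sum_(x : 'I_p * 'I_q) f x.1 * g x.2 = (\sum_i f i) * (\sum_j g j).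
Proof.
rewrite -(pair_bigA _ (fun i j => f i * g j)) /= big_distrl /=.
by apply: eq_bigr => i _; rewrite big_distrr.
Qed.
Arguments sum_pair {R p q}.

Theorem theorem2 (R : realType) (p q : nat) (e : rel (vtx p q)) :
  simple_graph e ->
  (exists x y, e x y) ->
  separable (density R[i] e) ->
  degm R[i] e = degm R[i] (ptrans e).
Proof.
move=> [esy eirr] [x0 [y0 exy]] [m [lam [a [b [lam0 _ _ _ hrho]]]]].
set c := ((2 * nedges e)%:R)^-1 : R[i].
have c0 : c != 0.
  rewrite invr_eq0 pnatr_eq0 -lt0n muln_gt0 /= /nedges half_gt0.
  have hne : x0 != y0 by apply: contraTneq exy => ->; rewrite eirr.
  have hne2 : (x0, y0) != (y0, x0) by rewrite xpair_eqE (negbTE hne).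
  apply: leq_trans (subset_leq_card (_ : [set (x0, y0); (y0, x0)] \subset _)).
    by rewrite cards2 hne2.
  apply/subsetP => uv; rewrite !inE => /orP [] /eqP -> /=; rewrite ?exy //.
  by rewrite esy.
have rowsum : forall x, \sum_(y : 'I_p * 'I_q) lapm R[i] e x y = 0.
  move=> x; rewrite /lapm sumrB.
  rewrite (bigD1 x) //= /degm eqxx big1 ?addr0; last first.
    by move=> y /negbTE; rewrite eq_sym => ->.
  by rewrite /adjm -deg_sum subrr.
have Tzero : \sum_(x : 'I_p * 'I_q) \sum_(y : 'I_p * 'I_q) density R[i] e x y = 0.
  by apply: big1 => x _; rewrite /density -big_distrr /= rowsum mulr0.
set A := fun k => \sum_i a k i.
set B := fun k => \sum_j b k j.
have Texp : \sum_(x : 'I_p * 'I_q) \sum_(y : 'I_p * 'I_q) density R[i] e x y =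
   \sum_(k < m) (lam k)%:C%C * ((A k * B k) * (A k * B k)^*).
  under eq_bigr => x _ do under eq_bigr => y _ do rewrite hrho.
  under eq_bigr => x _ do rewrite exchange_big /=.
  rewrite exchange_big /=; apply: eq_bigr => k _.
  rewrite -(sum_pair (a k) (b k)) rmorph_sum big_distrl /= big_distrr /=.
  apply: eq_bigr => x _; rewrite big_distrr /= big_distrr /=.
  apply: eq_bigr => y _; rewrite /prod_state rmorphM /=.
  by congr (_ * _); rewrite mulrACA.
have tk : forall k, (lam k)%:C%C * ((A k * B k) * (A k * B k)^*) = 0.
  move=> k; apply: (psumr_eq0P _ (etrans (esym Texp) Tzero)) => // j _.
  by apply: mulr_ge0; [rewrite ler0c | apply: mul_conjC_ge0].
have zk : forall k, (lam k)%:C%C * ((\sum_i (a k i)^*) * B k) = 0.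
  move=> k; have := tk k; move/eqP; rewrite mulf_eq0 mul_conjC_eq0 mulf_eq0.
  rewrite -rmorph_sum -/(A k).
  by case/orP=> [/eqP -> | /orP [] /eqP ->]; rewrite ?mul0r ?mulr0 ?rmorph0 ?mul0r ?mulr0.
have hdeg : forall x, deg e x = deg (ptrans e) x.
  case=> x1 x2; apply/eqP; rewrite -(eqr_nat R[i]) -subr_eq0.
  suff H : c * ((deg e (x1, x2))%:R - (deg (ptrans e) (x1, x2))%:R) = 0.
    by move/eqP: H; rewrite mulf_eq0 (negbTE c0).
  have -> : c * ((deg e (x1, x2))%:R - (deg (ptrans e) (x1, x2))%:R) =
     \sum_(y : 'I_p * 'I_q) density R[i] e (x1, y.2) (y.1, x2).
    rewrite /density -big_distrr /=; congr (_ * _).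
    rewrite /lapm sumrB; congr (_ - _); last by rewrite deg_sum.
    rewrite (bigD1 (x1, x2)) //= /degm eqxx big1 ?addr0 //.
    move=> [y1 y2] hne /=; case: eqP => // [[h1 h2]]; move: hne.
    by rewrite h1 h2 eqxx.
  under eq_bigr => y _ do rewrite hrho.
  rewrite exchange_big /=; apply: big1 => k _.
  apply: (@etrans _ _ ((lam k)%:C%C * ((a k x1 * (b k x2)^*) *
     ((\sum_i (a k i)^*) * B k)))); last by rewrite mulrCA zk mulr0.
  rewrite -(sum_pair (fun i => (a k i)^*) (b k)) !big_distrr /=.
  apply: eq_bigr => y _; rewrite /prod_state /=.
  ring.
apply: functional_extensionality => x; apply: functional_extensionality => y.
by rewrite /degm hdeg.
Qed.
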